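(* Let $n,r,w\ge 1$ be integers and $N=nr$. The modular $N\times N$ optical cross-connect $\hat{\mathcal{Q}}(n\times r,w)$ defined below is nonblocking at each wavelength: for every wavelength $\lambda\in\{\lambda_0,\dots,\lambda_{w-1}\}$, every input $1\times n$ WSS $ap'$ and every output $n\times1$ WSS $bq'$ ($a,b\in\{0,\dots,n-1\}$, $p',q'\in\{0,\dots,r-1\}$), and every set of already established connections, if $\lambda$ is idle at input $ap'$ and idle at output $bq'$, then a connection at wavelength $\lambda$ from input $ap'$ to output $bq'$ can be established without altering the existing connections.
   Context: Model of components. A $1\times k$ wavelength selective switch (WSS) has one input and $k$ outputs; each wavelength present at its input can be switched to any one of its $k$ outputs, independently of the other wavelengths. A $k\times 1$ WSS is the inverse: it forwards to its single output signals arriving at its $k$ inputs, provided no two signals on the same wavelength are fed to it simultaneously (each wavelength at the output comes from at most one input, chosen independently per wavelength). For an integer $r$, the classical $r\times r$ OXC $\mathcal{Q}(r,w)$ consists of $r$ input $1\times r$ WSSs numbered $0,\dots,r-1$ (its inputs), $r$ output $r\times 1$ WSSs numbered $0,\dots,r-1$ (its outputs), and, for all $p',q'$, exactly one fiber from the $q'$th output of input WSS $p'$ to the $p'$th input of output WSS $q'$. The modular OXC $\hat{\mathcal{Q}}(n\times r,w)$ consists of: $N$ input $1\times n$ WSSs labelled $ap'$ (the $p$th one, $p=ar+p'$; these are the OXC inputs), $n^2$ classical $r\times r$ OXCs $\mathcal{Q}_{ab}(r)$ ($a,b\in\{0,\dots,n-1\}$), and $N$ output $n\times 1$ WSSs labelled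 $bq'$ (the $q$th one, $q=br+q'$; these are the OXC outputs). The $b$th output of $1\times n$ WSS $ap'$ is connected to the $p'$th input of $\mathcal{Q}_{ab}(r)$, and the $q'$th output of $\mathcal{Q}_{ab}(r)$ is connected to the $a$th input of $n\times1$ WSS $bq'$. Every port and link carries wavelengths $\lambda_0,\dots,\lambda_{w-1}$; a connection at wavelength $\lambda$ from input $ap'$ to output $bq'$ uses $\lambda$ along a path of links from that input to that output; each wavelength on each port or link is used by at most one connection, and a wavelength is idle at a port if no existing connection uses it there. *)

(* Defs.v *)
From mathcomp Require Import all_boot.
Set Implicit Arguments. Unset Strict Implicit. Unset Printing Implicit Defensive.

Section OXC.
Variables n r w : nat.

Inductive node : Type :=
  | InW  of 'I_n & 'I_r          (* input 1 x n WSS  a p'                    *)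
  | QIn  of 'I_n & 'I_n & 'I_r   (* input 1 x r WSS p' of Q_ab (a, b, p')    *)
  | QOut of 'I_n & 'I_n & 'I_r   (* output r x 1 WSS q' of Q_ab (a, b, q')   *)
  | OutW of 'I_n & 'I_r.         (* output n x 1 WSS  b q'                   *)

Inductive link : Type :=
  (* b-th output of 1 x n WSS a p'  ->  p'-th input of Q_ab *)
  | L1 of 'I_n & 'I_r & 'I_n
  (* inside Q_ab: q'-th output of input WSS p' -> p'-th input of output WSS q' *)
  | L2 of 'I_n & 'I_n & 'I_r & 'I_r
  (* q'-th output of Q_ab  ->  a-th input of n x 1 WSS b q' *)
  | L3 of 'I_n & 'I_n & 'I_r.

Definition ltail (l : link) : node :=
  match l with
  | L1 a p' b => InW a p'
  | L2 a b p' q' => QIn a b p'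
  | L3 a b q' => QOut a b q'
  end.

Definition lhead (l : link) : node :=
  match l with
  | L1 a p' b => QIn a b p'
  | L2 a b p' q' => QOut a b q'
  | L3 a b q' => OutW b q'
  end.

Fixpoint path_from (u : node) (ls : list link) (v : node) : Prop :=
  match ls with
  | nil => u = v
  | l :: ls' => ltail l = u /\ path_from (lhead l) ls' v
  end.

Fixpoint lin (l : link) (ls : list link) : Prop :=
  match ls with
  | nil => False
  | l' :: ls' => l = l' \/ lin l ls'
  end.

Record conn : Type := Conn {
  cwl : 'I_w;
  csrc : 'I_n * 'I_r;
  cdst : 'I_n * 'I_r;
  cpath : list link }.

Definition valid_conn (c : conn) : Prop :=
  path_from (InW (csrc c).1 (csrc c).2) (cpath c) (OutW (cdst c).1 (cdst c).2).

Definition valid_family (I : Type) (cs : I -> conn) : Prop :=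
  (forall i, valid_conn (cs i)) /\
  (forall i j, i <> j -> cwl (cs i) = cwl (cs j) ->
     [/\ csrc (cs i) <> csrc (cs j),
         cdst (cs i) <> cdst (cs j) &
         forall l, lin l (cpath (cs i)) -> ~ lin l (cpath (cs j))]).

Definition idle_at_input (I : Type) (cs : I -> conn) (lam : 'I_w)
  (a : 'I_n) (p' : 'I_r) : Prop :=
  forall i, ~ (cwl (cs i) = lam /\ csrc (cs i) = (a, p')).

Definition idle_at_output (I : Type) (cs : I -> conn) (lam : 'I_w)
  (b : 'I_n) (q' : 'I_r) : Prop :=
  forall i, ~ (cwl (cs i) = lam /\ cdst (cs i) = (b, q')).

Definition add_conn (I : Type) (cs : I -> conn) (c : conn) : option I -> conn :=
  fun o => match o with Some i => cs i | None => c end.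

End OXC.

(* Main.v *)
Require Import Defs.
From mathcomp Require Import all_boot.

Lemma path_shape (n r : nat) (a : 'I_n) (p : 'I_r) (b : 'I_n) (q : 'I_r)
  (ls : list (link n r)) :
  path_from (InW a p) ls (OutW b q) ->
  ls = [:: L1 a p b; L2 a b p q; L3 a b q].
Proof.
case: ls => [|l1 [|l2 [|l3 [|l4 ls]]]] /=; try (by []);
  case: l1 => [???|????|???]; rewrite /=; try (by case);
  try (case: l2 => [???|????|???]; rewrite /=; try (by case));
  try (case: l3 => [???|????|???]; rewrite /=; try (by case));
  try (case: l4 => [???|????|???]; rewrite /=; try (by case));
  intuition congruence.
Qed.

Theorem theorem1 (n r w : nat) (hn : 0 < n) (hr : 0 < r) (hw : 0 < w)
  (I : finType) (cs : I -> conn n r w) :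
  valid_family cs ->
  forall (lam : 'I_w) (a b : 'I_n) (p' q' : 'I_r),
    idle_at_input cs lam a p' ->
    idle_at_output cs lam b q' ->
    exists c : conn n r w,
      [/\ cwl c = lam, csrc c = (a, p'), cdst c = (b, q') &
          valid_family (add_conn cs c)].
Proof.
move=> [Hv Hd] lam a b p' q' Hin Hout.
exists (Conn lam (a, p') (b, q') [:: L1 a p' b; L2 a b p' q'; L3 a b q']).
have Hc : valid_conn (Conn lam (a, p') (b, q') [:: L1 a p' b; L2 a b p' q'; L3 a b q']).
  by rewrite /valid_conn /=.
have key : forall j, cwl (cs j) = lam -> forall l,
    lin l [:: L1 a p' b; L2 a b p' q'; L3 a b q'] -> ~ lin l (cpath (cs j)).
  move=> j Hj l Hl Hl2.
  have := Hv j; rewrite /valid_conn.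
  case: (cs j) Hj Hl2 (Hin j) (Hout j) => wl [aj pj] [bj qj] pth /= -> Hl2 Hi Ho Hp.
  move: Hl2; rewrite (@path_shape _ _ _ _ _ _ _ Hp) /=.
  case: Hl => [->|[->|[->|[]]]] [E|[E|[E|[]]]]; try discriminate;
  case: E => *; subst; by [apply: Hi | apply: Ho].
split=> //; split.
  by case.
case=> [i|] [j|] //= Hij Hw.
- by apply: Hd => // E; apply: Hij; rewrite E.
- split.
  + by move=> E; apply: (Hin i); rewrite E.
  + by move=> E; apply: (Hout i); rewrite E.
  + by move=> l H1 H2; apply: (key i Hw l H2 H1).
- split.
  + by move=> E; apply: (Hin j); rewrite -E.
  + by move=> E; apply: (Hout j); rewrite -E.
  + by move=> l H1 H2; apply: (key j (esym Hw) l H1 H2).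
Qed.
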